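(* Let $z\in\mathbb{R}_{\ge0}^s$ with $\sum_j z_j>0$, $\eta>0$, and let $\tilde z_k=\max\big(z_k-\eta\frac{\partial\mathcal{H}}{\partial z_k}(z),0\big)$ (with $\tilde z_k=0$ when $z_k=0$), and suppose $\sum_j\tilde z_j>0$. Let $p_i=z_i/\sum_j z_j$ and $\tilde p_i=\tilde z_i/\sum_j\tilde z_j$. Then for all $k,k'$ with $z_k<z_{k'}$ we have $\tilde p_k\le\tilde p_{k'}$, i.e. the order of state probabilities is preserved.
   Context: $\mathcal{H}(z)=-\sum_i \frac{z_i}{\sum_j z_j}\log\frac{z_i}{\sum_j z_j}$ with $0\log0=0$; for $z_k>0$ the gradient is the partial derivative, and for $z_k=0$ it is regarded as $+\infty$. *)

(* Defs.v *)
From mathcomp Require Import all_boot all_order all_algebra.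
From mathcomp Require Import all_classical all_reals all_analysis.
Set Implicit Arguments. Unset Strict Implicit. Unset Printing Implicit Defensive.
Import Order.TTheory GRing.Theory Num.Theory.
Local Open Scope ring_scope.

Definition xlnx {R : realType} (x : R) : R := if x == 0 then 0 else x * ln x.

Definition mass {R : realType} {s : nat} (z : 'I_s -> R) : R := \sum_(j < s) z j.

Definition prob {R : realType} {s : nat} (z : 'I_s -> R) (i : 'I_s) : R :=
  z i / mass z.

Definition entropy {R : realType} {s : nat} (z : 'I_s -> R) : R :=
  - \sum_(i < s) xlnx (prob z i).

Definition shift {R : realType} {s : nat} (z : 'I_s -> R) (k : 'I_s) (t : R)
  : 'I_s -> R := fun i => z i + (if i == k then t else 0).

(* partial derivative dH/dz_k at z (used when z_k > 0) *)
Definition dH {R : realType} {s : nat} (z : 'I_s -> R) (k : 'I_s) : R :=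
  derive1 (fun t : R => entropy (shift z k t)) 0.

(* one projected gradient step: ztilde_k = max(z_k - eta dH/dz_k, 0),
   and ztilde_k = 0 when z_k = 0 (gradient regarded as +oo) *)
Definition zstep {R : realType} {s : nat} (eta : R) (z : 'I_s -> R)
  (k : 'I_s) : R :=
  if z k == 0 then 0 else Num.max (z k - eta * dH z k) 0.

(* Main.v *)
Require Import Defs.
From mathcomp Require Import all_boot all_order all_algebra.
From mathcomp Require Import all_classical all_reals all_analysis.
From mathcomp Require Import ring lra.
Import Order.TTheory GRing.Theory Num.Theory.
Local Open Scope ring_scope.


Lemma entropy_alt (R : realType) (s : nat) (w : 'I_s -> R) :
  (forall i, 0 <= w i) -> 0 < mass w ->
  entropy w = ln (mass w) - (\sum_(i < s) xlnx (w i)) / mass w.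
Proof.
move=> w0 M0.
have pt i : xlnx (prob w i) = xlnx (w i) / mass w - (w i / mass w) * ln (mass w).
  rewrite /xlnx /prob; have [->|wi0] := eqVneq (w i) 0.
    by rewrite !mul0r eqxx subr0.
  have wp : 0 < w i by rewrite lt_def wi0 w0.
  rewrite mulf_eq0 invr_eq0 (negbTE wi0) (gt_eqF M0) /=.
  rewrite ln_div ?posrE //; field; exact: lt0r_neq0.
rewrite /entropy (eq_bigr _ (fun i _ => pt i)) sumrB -mulr_suml -mulr_suml -mulr_suml.
rewrite -/(mass w) divff ?gt_eqF // mul1r; lra.
Qed.

Lemma le_mass (R : realType) (s : nat) (z : 'I_s -> R) k : (forall j, 0 <= z j) -> z k <= mass z.
Proof.
move=> hz; rewrite /mass (bigD1 k) //= lerDl; exact: sumr_ge0.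
Qed.

Lemma mass_shift (R : realType) (s : nat) (z : 'I_s -> R) k t : mass (Defs.shift z k t) = mass z + t.
Proof.
rewrite /mass /Defs.shift big_split /=; congr (_ + _).
rewrite (bigD1 k) //= eqxx big1 ?addr0 // => i /negbTE ->; done.
Qed.

Lemma sum_shift (R : realType) (s : nat) (z : 'I_s -> R) k t :
  \sum_(i < s) xlnx (Defs.shift z k t i) =
  \sum_(i < s) xlnx (z i) - xlnx (z k) + xlnx (z k + t).
Proof.
rewrite /Defs.shift (bigD1 k) //= [in RHS](bigD1 k) //= eqxx.
rewrite (eq_bigr (fun i => xlnx (z i))); last by move=> i /negbTE ->; rewrite addr0.
ring.
Qed.
Lemma dH_eq (R : realType) (s : nat) (z : 'I_s -> R) k : (forall j, 0 <= z j) -> 0 < mass z ->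
  0 < z k ->
  dH z k = (\sum_(i < s) xlnx (z i)) / (mass z ^+ 2) - ln (z k) / mass z.
Proof.
move=> hz hS zk.
set S := mass z; set B := \sum_(i < s) _.
have hS1 : forall c : R, is_derive (0:R) 1 (fun t : R => c + t) 1.
  move=> c; have := is_deriveD (is_derive_cst c (0:R) 1) (is_derive_id (0:R) 1).
  by rewrite add0r.
have hL : forall c : R, 0 < c -> is_derive (0:R) 1 (@ln R \o (fun t : R => c + t)) ((c + 0)^-1 * 1).
  move=> c c0; apply: is_derive1_comp; apply: is_derive1_ln; by rewrite addr0.
have hV := is_deriveV (lt0r_neq0 (_ : 0 < S + 0 :> R)) (hS1 S).
have hN := is_deriveM (hS1 (z k)) (hL (z k) zk).
have dF := is_deriveB (hL S hS) (is_deriveM (is_deriveD (is_derive_cst (B - xlnx (z k)) (0:R) 1) hN) (hV _)).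
have dF2 := dF (ltac:(by rewrite addr0)).
rewrite /dH derive1E.
have := @near_eq_is_derive _ _ _ _ (fun t => entropy (Defs.shift z k t)) 0 1 _ _ dF2.
move=> H; rewrite (@derive_val _ _ _ _ _ _ _ (H _)); last first.
  near=> t.
  have tk : `|t| < z k by near: t; exact: (@nbhs0_lt R R^o _ zk).
  have tk' : 0 < z k + t.
    move: tk; rewrite ltr_norml => /andP[tk _]; lra.
  have hw : forall i, 0 <= Defs.shift z k t i.
    move=> i; rewrite /Defs.shift; case: eqP => [->|_]; [exact: ltW|by rewrite addr0].
  have hm : 0 < mass (Defs.shift z k t).
    rewrite mass_shift; have := @le_mass R s z k hz; rewrite -/S; lra.
  rewrite entropy_alt // mass_shift sum_shift -/S -/B {3}/xlnx gt_eqF //=.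
rewrite /= !addr0 !mulr1 /xlnx gt_eqF // !fctE /= !addr0.
rewrite /GRing.scale /= !mulr1 add0r. field; apply/andP; split; exact: lt0r_neq0.
Unshelve. all: by end_near.
Qed.

Theorem corollary8 (R : realType) (s : nat) (z : 'I_s -> R) (eta : R)
  (hz : forall j, 0 <= z j) (hS : 0 < mass z) (heta : 0 < eta)
  (hS' : 0 < mass (zstep eta z)) :
  forall k k' : 'I_s, z k < z k' ->
    prob (zstep eta z) k <= prob (zstep eta z) k'.
Proof.
move=> k k' lt.
rewrite /prob; apply: ler_wpM2r; first by rewrite invr_ge0 ltW.
have zk' : 0 < z k' by apply: le_lt_trans lt.
rewrite /zstep (gt_eqF zk').
case: ifP => [_|/negbT zk0]; first by rewrite le_max lexx orbT.
have zk : 0 < z k by rewrite lt_def zk0 hz.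
rewrite ge_max; apply/andP; split; last by rewrite le_max lexx orbT.
rewrite le_max; apply/orP; left.
rewrite !dH_eq //.
have hl : ln (z k) <= ln (z k') by rewrite ler_ln ?posrE // ltW.
have h : eta * (ln (z k) / mass z) <= eta * (ln (z k') / mass z).
  apply: ler_wpM2l; first exact: ltW.
  apply: ler_wpM2r => //; by rewrite invr_ge0 ltW.
lra.
Qed.
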